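(* For every graph $G$, $\gamma_{oiR}(G)<\gamma_{oidR}(G)$.
   Context: Graphs are finite and simple (with at least one vertex). A DRD function of $G$ is $f:V(G)\to\{0,1,2,3\}$ such that every vertex with value $0$ has a neighbor with value $3$ or two neighbors with value $2$, and every vertex with value $1$ has a neighbor with value at least $2$; it is an OIDRD function if the set of vertices with value $0$ is independent, and $\gamma_{oidR}(G)$ is the minimum weight $\sum_v f(v)$ of an OIDRD function. A Roman dominating function is $f:V(G)\to\{0,1,2\}$ such that every vertex with value $0$ has a neighbor with value $2$; it is an OIRD function if the set of vertices with value $0$ is independent, and $\gamma_{oiR}(G)$ is the minimum weight of an OIRD function. *)

(* Defs.v *)
From mathcomp Require Import all_boot.
Set Implicit Arguments. Unset Strict Implicit. Unset Printing Implicit Defensive.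

Definition simple_graph (T : finType) (adj : rel T) : Prop :=
  symmetric adj /\ irreflexive adj.

Section Dom.
Variables (T : finType) (adj : rel T).

Definition weight (k : nat) (f : {ffun T -> 'I_k}) : nat := \sum_(v : T) (f v : nat).

Definition zero_indep k (f : {ffun T -> 'I_k}) : bool :=
  [forall u, forall v, ((f u : nat) == 0) && ((f v : nat) == 0) ==> ~~ adj u v].

Definition is_DRD (f : {ffun T -> 'I_4}) : bool :=
  [forall v, ((f v : nat) == 0) ==>
       ([exists u, adj v u && ((f u : nat) == 3)] ||
        [exists u, exists w, [&& u != w, adj v u, adj v w,
                                 (f u : nat) == 2 & (f w : nat) == 2]])]
  && [forall v, ((f v : nat) == 1) ==> [exists u, adj v u && (2 <= f u)]].

Definition is_OIDRD (f : {ffun T -> 'I_4}) : bool := is_DRD f && zero_indep f.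

Definition is_RD (f : {ffun T -> 'I_3}) : bool :=
  [forall v, ((f v : nat) == 0) ==> [exists u, adj v u && ((f u : nat) == 2)]].

Definition is_OIRD (f : {ffun T -> 'I_3}) : bool := is_RD f && zero_indep f.

(* minimum weights; the constant-maximal function is always admissible,
   so the starting value 3|V| (resp. 2|V|) does not affect the minimum *)
Definition gamma_oidR : nat :=
  \big[minn/(3 * #|T|)]_(f : {ffun T -> 'I_4} | is_OIDRD f) weight f.

Definition gamma_oiR : nat :=
  \big[minn/(2 * #|T|)]_(f : {ffun T -> 'I_3} | is_OIRD f) weight f.
End Dom.

(* Main.v *)
Require Import Defs.
From mathcomp Require Import all_boot.
From mathcomp Require Import zify.

Lemma bigmin_le (I : finType) (P : pred I) (F : I -> nat) m j :
  P j -> \big[minn/m]_(i | P i) F i <= F j.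
Proof.
move=> Pj.
have: j \in index_enum I by rewrite mem_index_enum.
elim: (index_enum I) => [|x s IH] //; rewrite big_cons inE.
case/orP => [/eqP <-|/IH H].
  by rewrite Pj geq_minl.
case: (P x) => //; exact: leq_trans (geq_minr _ _) H.
Qed.

Lemma bigmin_gt (I : finType) (P : pred I) (F : I -> nat) m c :
  c < m -> (forall i, P i -> c < F i) -> c < \big[minn/m]_(i | P i) F i.
Proof.
move=> Hm HF; apply: (big_ind (fun x => c < x)) => //.
by move=> x y Hx Hy; rewrite leq_min Hx Hy.
Qed.

Lemma main_lemma (T : finType) (adj : rel T) (f : {ffun T -> 'I_4}) u :
  is_OIDRD adj f -> 2 <= f u -> (forall v, f v <= f u) ->
  gamma_oiR adj < weight f.
Proof.
move=> /andP [/andP [H0 H1] Hind] Hu Hmax.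
pose g : {ffun T -> 'I_3} :=
  [ffun v => if v == u then inord (f u - 1) else inord (minn (f v) 2)].
have gE : forall v, (g v : nat) = if v == u then f u - 1 else minn (f v) 2.
  move=> v; rewrite ffunE; case: (v == u); rewrite inordK //.
    by have := ltn_ord (f u); lia.
  by lia.
have g0 : forall v, ((g v : nat) == 0) = ((f v : nat) == 0).
  move=> v; rewrite gE; case: (eqVneq v u) => [->|_]; lia.
have Hg : is_OIRD adj g.
  apply/andP; split.
    apply/forallP => v; apply/implyP; rewrite g0 => fv0.
    have vu : v != u by apply/eqP => E; move: fv0; rewrite E; lia.
    have key : forall w, adj v w -> 2 <= f w -> (w != u) || ((f u : nat) == 3) ->
        [exists u0, adj v u0 && ((g u0 : nat) == 2)].
      move=> w avw fw2 Hw; apply/existsP; exists w; rewrite avw /= gE.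
      case: (eqVneq w u) Hw => [E|_] /=; last by lia.
      by subst w; rewrite ?eqxx /= => /eqP ->.
    move/forallP: H0 => /(_ v) /implyP /(_ fv0) /orP [].
      move/existsP => [w /andP [avw /eqP fw3]].
      apply: (key w avw); first by rewrite fw3.
      case: eqP => [E|//]; by rewrite -E fw3 orbT.
    move/existsP => [w1 /existsP [w2 /and5P [w12 a1 a2 /eqP f1 /eqP f2]]].
    case: (eqVneq w1 u) => [E1|n1].
      apply: (key w2 a2); first by rewrite f2.
      by rewrite -E1 eq_sym w12.
    by apply: (key w1 a1); [rewrite f1 | rewrite n1].
  apply/forallP => x; apply/forallP => y; rewrite !g0.
  by move/forallP: Hind => /(_ x) /forallP /(_ y).
rewrite /gamma_oiR; apply: leq_ltn_trans (bigmin_le _ _ _ _ _ Hg) _.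
rewrite /weight (bigD1 u) //= [X in _ < X](bigD1 u) //=.
have h1 : \sum_(i | i != u) (g i : nat) <= \sum_(i | i != u) (f i : nat).
  apply: leq_sum => i /negbTE iu; rewrite gE iu; lia.
have h2 : (g u : nat) < f u by rewrite gE eqxx; lia.
lia.
Qed.

Theorem proposition2 (T : finType) (adj : rel T) :
  simple_graph adj -> 0 < #|T| ->
  gamma_oiR adj < gamma_oidR adj.
Proof.
move=> _ hT.
apply: bigmin_gt.
  have: gamma_oiR adj <= 2 * #|T|.
    apply: (big_ind (fun x => x <= 2 * #|T|)) => //.
      by move=> x y Hx _; exact: leq_trans (geq_minl _ _) Hx.
    move=> h _; rewrite /weight.
    have: \sum_(v : T) (h v : nat) <= \sum_(v : T) 2.
      by apply: leq_sum => v _; exact: leq_ord.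
    by rewrite sum_nat_const mulnC.
  lia.
move=> f Hf.
case: (pickP (fun u => (f u : nat) == 3)) => [u /eqP fu3|no3].
  apply: (@main_lemma _ _ _ u Hf); first by rewrite fu3.
  by move=> v; rewrite fu3; exact: leq_ord.
case: (pickP (fun u => (f u : nat) == 2)) => [u /eqP fu2|no2].
  apply: (@main_lemma _ _ _ u Hf); first by rewrite fu2.
  move=> v; rewrite fu2; have := ltn_ord (f v); have := no3 v; simpl.
  case: (f v) => [[|[|[|[|k]]]] ?] //=.
exfalso.
case/card_gt0P: hT => x _.
have small : forall v, (f v : nat) < 2.
  move=> v; have := ltn_ord (f v); have := no3 v; have := no2 v; simpl.
  case: (f v) => [[|[|[|[|k]]]] ?] //=.
move: Hf => /andP [/andP [H0 H1] _].
have := small x; case Ex: (f x : nat) => [|[|k]] // _.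
  move/forallP: H0 => /(_ x) /implyP; rewrite Ex => /(_ isT) /orP [].
    by move/existsP => [w /andP [_ /eqP E]]; have := small w; rewrite E.
  move/existsP => [w1 /existsP [w2 /and5P [_ _ _ /eqP E _]]].
  by have := small w1; rewrite E.
move/forallP: H1 => /(_ x) /implyP; rewrite Ex => /(_ isT).
move/existsP => [w /andP [_ E]]; have := small w; by rewrite ltnNge E.
Qed.
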